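(* Let $a,d\in\mathbb{N}$ and $m,n\in\mathbb{N}$ with $m,n\ge 2$. Let $X_1,\dots,X_m$ be i.i.d. random variables uniformly distributed on $\{1,\dots,a\}$ and $Y_1,\dots,Y_n$ i.i.d. random variables uniformly distributed on $\{1,\dots,d\}$, independent of the $X_i$. Let $X^{(1)}\ge X^{(2)}$ be the largest and second largest values among $X_1,\dots,X_m$ (counted with multiplicity), and similarly $Y^{(1)}\ge Y^{(2)}$ among $Y_1,\dots,Y_n$. Then \begin{align*} \Pr\left(X^{(1)}>Y^{(1)}\text{ and }X^{(2)}>Y^{(2)}\right) &= \sum_{y_1=2}^{\min \{a,d\} } \sum_{y_2=1}^{y_{1}-1} \frac{n\big(y_2^{n-1}-(y_2-1)^{n-1}\big)\big(a^m-y_1^m-m(a-y_1)y_2^{m-1}\big)}{a^m d^n} \\ & \quad + \sum_{y_{1}=1}^{\min\{a,d\}}\frac{\big( y_1^n-(y_1-1)^{n}-n(y_1-1)^{n-1} \big) \big(a^m+(m-1)y_1^m-am\,y_1^{m-1} \big)}{a^m d^n}. \end{align*}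
   Context: $X^{(i)}$ denotes the $i$-th largest of the dice values (order statistics, so if the two largest values are equal then $X^{(1)}=X^{(2)}$). In the paper's notation the event is $\{X_i\}_m>_{2,2}\{Y_j\}_n$: both of the comparisons $X^{(1)}>Y^{(1)}$, $X^{(2)}>Y^{(2)}$ hold (ties go to the defender). *)

(* Defs.v *)
From mathcomp Require Import all_boot all_order all_algebra.
Set Implicit Arguments. Unset Strict Implicit. Unset Printing Implicit Defensive.
Import Order.TTheory GRing.Theory Num.Theory.

(* A die with [a] faces: outcome [i : 'I_a] shows the value [i.+1] in {1,...,a}. *)
Definition dieval (a : nat) (i : 'I_a) : nat := i.+1.

Definition dice_values (m a : nat) (x : {ffun 'I_m -> 'I_a}) : seq nat :=
  [seq dieval (x i) | i <- enum 'I_m].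

(* k-th largest value (0-indexed: k = 0 is the largest), counted with multiplicity
   (order statistics: sort in nonincreasing order). *)
Definition kth_largest (s : seq nat) (k : nat) : nat := nth 0 (sort geq s) k.

Definition beats22 (m n a d : nat) (x : {ffun 'I_m -> 'I_a}) (y : {ffun 'I_n -> 'I_d}) : bool :=
  (kth_largest (dice_values y) 0 < kth_largest (dice_values x) 0) &&
  (kth_largest (dice_values y) 1 < kth_largest (dice_values x) 1).

Definition prob22 (m n a d : nat) : rat :=
  \sum_(x : {ffun 'I_m -> 'I_a}) \sum_(y : {ffun 'I_n -> 'I_d})
     ((\prod_(i < m) (a%:R)^-1) * (\prod_(j < n) (d%:R)^-1) * (beats22 x y)%:R).

(* Main.v *)
Require Import Defs.
From mathcomp Require Import all_boot all_order all_algebra.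
From mathcomp Require Import zify ring lra.
Import Order.TTheory GRing.Theory Num.Theory.
Set Implicit Arguments. Unset Strict Implicit.

Definition cnt (m A : nat) (P : seq nat -> bool) : nat :=
  \sum_(x : {ffun 'I_m -> 'I_A}) P (dice_values x).

Lemma cnt0 A P : cnt 0 A P = P [::].
Proof.
rewrite /cnt.
rewrite (eq_bigr (fun _ => nat_of_bool (P [::]))); last first.
  by move=> x _; rewrite /dice_values enum_ord0.
rewrite big_const iter_addn_0 card_ffun !card_ord expn0; lia.
Qed.

Definition ffcons m A (c : 'I_A) (t : {ffun 'I_m -> 'I_A}) : {ffun 'I_m.+1 -> 'I_A} :=
  [ffun i => if unlift ord0 i is Some j then t j else c].

Definition fftl m A (x : {ffun 'I_m.+1 -> 'I_A}) : 'I_A * {ffun 'I_m -> 'I_A} :=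
  (x ord0, [ffun j => x (lift ord0 j)]).

Lemma dv_cons m A (c : 'I_A) (t : {ffun 'I_m -> 'I_A}) : dice_values (ffcons c t) = (c : nat).+1 :: dice_values t.
Proof.
rewrite /dice_values enum_ordSl /= ffunE unlift_none -map_comp /=; congr (_ :: _).
by apply: eq_map => j /=; rewrite ffunE liftK.
Qed.

Lemma cntS m A P : cnt m.+1 A P = \sum_(c < A) cnt m A (fun s => P ((c : nat).+1 :: s)).
Proof.
rewrite /cnt pair_big /=.
rewrite (reindex (fun p : 'I_A * {ffun 'I_m -> 'I_A} => ffcons p.1 p.2)) /=.
  by apply: eq_bigr => p _; rewrite dv_cons.
exists (@fftl m A) => [[c t] _ | x _].
  rewrite /fftl /ffcons /= ffunE unlift_none; congr (_, _).
  by apply/ffunP => j; rewrite !ffunE liftK.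
apply/ffunP => i; rewrite /fftl /ffcons ffunE /=.
case: unliftP => [j ->|->] //; by rewrite ffunE.
Qed.

Lemma sorted_nth (r : seq nat) t k : sorted geq r ->
  (t < nth 0 r k) = (k < count (fun z => t < z) r).
Proof.
elim: r k => [|z r IH] k /= hs; first by rewrite nth_nil; case: k.
have hr : sorted geq r by apply: path_sorted hs.
have hall : all (fun y => y <= z) r.
  have := order_path_min _ hs; apply => //.
  by move=> x y w /= h1 h2; apply: leq_trans h2 h1.
case: (ltnP t z) => htz.
  by case: k => [|k] /=; rewrite ?htz //= IH.
have c0 : count (fun z0 => t < z0) r = 0.
  apply/eqP; rewrite -leqn0 leqNgt -has_count; apply/hasPn => y hy.
  by move/allP: hall => /(_ y hy) hy'; rewrite -leqNgt (leq_trans hy').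
rewrite c0 /= ltnNge [k < 0]ltn0; apply/negbF.
case: k => [|k] //=.
case: (ltnP k (size r)) => hk; last by rewrite nth_default.
move/allP: hall => /(_ _ (mem_nth 0 hk)) h.
exact: leq_trans h htz.
Qed.

Lemma kthP (s : seq nat) t k : (t < kth_largest s k) = (k < count (fun z => t < z) s).
Proof.
rewrite /kth_largest sorted_nth; last by apply: sort_sorted => x y; exact: leq_total.
by have /permP -> : perm_eq (sort geq s) s by rewrite perm_sort.
Qed.

Definition cg (t : nat) (s : seq nat) := count (fun z => t < z) s.

Lemma cg_cons t z s : cg t (z :: s) = (t < z) + cg t s.
Proof. by []. Qed.

Lemma cg_mono t t' s : t <= t' -> cg t' s <= cg t s.
Proof. by move=> h; apply: sub_count => z /= hz; apply: leq_ltn_trans hz. Qed.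

Lemma cnt_ext m A P Q : (forall s, P s = Q s) -> cnt m A P = cnt m A Q.
Proof. by move=> h; apply: eq_bigr => x _; rewrite h. Qed.

Lemma cnt_lin m A (P P1 P2 : seq nat -> bool) (b1 b2 : bool) :
  (forall s, (P s : nat) = b1 * P1 s + b2 * P2 s) ->
  cnt m A P = b1 * cnt m A P1 + b2 * cnt m A P2.
Proof.
move=> h; rewrite /cnt.
rewrite (eq_bigr (fun x => b1 * P1 (dice_values x) + b2 * P2 (dice_values x))); last by move=> x _; rewrite h.
rewrite big_split /= -!big_distrr //.
Qed.

Lemma cnt_lin1 m A (P P1 : seq nat -> bool) (b : bool) :
  (forall s, (P s : nat) = b * P1 s) -> cnt m A P = b * cnt m A P1.
Proof.
move=> h; rewrite /cnt.
rewrite (eq_bigr (fun x => b * P1 (dice_values x))); last by move=> x _; rewrite h.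
by rewrite -big_distrr.
Qed.

Lemma sumI_gen A u w : \sum_(c < A) ((u <= c) && (c < w)) = minn A w - minn A u.
Proof.
elim: A => [|A IH]; first by rewrite big_ord0; lia.
rewrite big_ord_recr /= IH.
case: (leqP u A) => h1; case: (ltnP A w) => h2 /=; lia.
Qed.

Lemma sumI A u w : u <= w -> w <= A -> \sum_(c < A) ((u <= c) && (c < w)) = w - u.
Proof. move=> h1 h2; rewrite sumI_gen; lia. Qed.

Lemma sumI0 A w : w <= A -> \sum_(c < A) (c < w) = w.
Proof. by move=> h; rewrite -[X in _ = X]subn0 -(sumI (A:=A) (u:=0)). Qed.

Lemma cntN m A w : w <= A -> cnt m A (fun s => cg w s == 0) = w ^ m.
Proof.
move=> hw; elim: m => [|m IH]; first by rewrite cnt0.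
rewrite cntS (eq_bigr (fun c : 'I_A => (c < w) * w ^ m)); first by rewrite -big_distrl /= sumI0 // expnS.
move=> c _; rewrite -IH; apply: cnt_lin1 => s; rewrite cg_cons; case: (ltnP c w) => h /=; lia.
Qed.

Lemma cntT m A v u w : v <= u -> u <= w -> w <= A ->
  cnt m A (fun s => [&& cg v s == 1, cg u s == 1 & cg w s == 0]) = m * (w - u) * v ^ m.-1.
Proof.
move=> h1 h2 h3; elim: m => [|m IH]; first by rewrite cnt0.
rewrite cntS.
rewrite (eq_bigr (fun c : 'I_A => (c < v) * (m * (w - u) * v ^ m.-1) + ((u <= c) && (c < w)) * v ^ m)).
  rewrite big_split /= -!big_distrl /= sumI0 ?sumI //; try lia.
  case: m {IH} => [|m] /=; rewrite ?expnS; lia.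
move=> c _; rewrite -IH -(@cntN m A v); last lia.
apply: cnt_lin => s; rewrite !cg_cons.
have := cg_mono s h1; have := cg_mono s h2.
case: (ltnP c v) => a1; case: (leqP u c) => a2; case: (ltnP c w) => a3 /=; lia.
Qed.

Lemma cg_top m A (x : {ffun 'I_m -> 'I_A}) : cg A (dice_values x) = 0.
Proof.
apply/eqP; rewrite -leqn0 leqNgt -has_count; apply/hasPn => z.
by case/mapP => i _ ->; rewrite /dieval -leqNgt.
Qed.

Lemma cg_bot m A (x : {ffun 'I_m -> 'I_A}) : cg 0 (dice_values x) = m.
Proof.
rewrite /cg (eq_in_count (a2 := predT)).
  by rewrite count_predT size_map; exact: size_enum_ord.
by move=> z /mapP [i _ ->].
Qed.

Lemma cnt_ext_dv m A P Q : (forall x : {ffun 'I_m -> 'I_A}, P (dice_values x) = Q (dice_values x)) ->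
  cnt m A P = cnt m A Q.
Proof. by move=> h; apply: eq_bigr => x _; rewrite h. Qed.

Definition Gc m A u v := cnt m A (fun s => (0 < cg u s) && (1 < cg v s)).

Lemma Gc_formula m A u v : v <= u -> u <= A ->
  Gc m A u v + u ^ m + m * (A - u) * v ^ m.-1 = A ^ m.
Proof.
move=> h1 h2.
rewrite -(@cntN m A u) // -(@cntT m A v u A) //.
rewrite -(@cntN m A A) // /Gc /cnt -!big_split /=.
apply: eq_bigr => x _; rewrite cg_top /=.
have := cg_mono (dice_values x) h1; have := cg_mono (dice_values x) h2; rewrite cg_top.
move: (cg u _) (cg v _) => cu cv.
case: cu => [|[|cu]]; case: cv => [|[|cv]] //=.
Qed.

Lemma Gc_big m A u v : A < u -> Gc m A u v = 0.
Proof.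
move=> h; rewrite /Gc /cnt big1 // => x _.
have := cg_mono (dice_values x) (ltnW h); rewrite cg_top leqn0 => /eqP -> //.
Qed.

Definition Hc n D al be := cnt n D (fun s => (cg al s == 0) && (cg be s <= 1)).

Lemma Hc_formula n D al be : be <= al -> al <= D ->
  Hc n D al be = be ^ n + n * (al - be) * be ^ n.-1.
Proof.
move=> h1 h2.
rewrite -(@cntN n D be) ?(leq_trans h1) // -(@cntT n D be be al) //.
rewrite /Hc /cnt -big_split /=; apply: eq_bigr => x _.
have := cg_mono (dice_values x) h1.
move: (cg al _) (cg be _) => ca cb.
case: ca => [|[|ca]]; case: cb => [|[|cb]] //=.
Qed.

Definition Y1 n d (y : {ffun 'I_n -> 'I_d}) := kth_largest (dice_values y) 0.
Definition Y2 n d (y : {ffun 'I_n -> 'I_d}) := kth_largest (dice_values y) 1.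

Lemma kthP' s t k : (t < kth_largest s k) = (k < cg t s).
Proof. exact: kthP. Qed.

Lemma Y1_le n d (y : {ffun 'I_n -> 'I_d}) : Y1 y <= d.
Proof. by rewrite leqNgt /Y1 kthP' cg_top. Qed.

Lemma Y2_gt0 n d (y : {ffun 'I_n -> 'I_d}) : 2 <= n -> 0 < Y2 y.
Proof. by move=> h; rewrite /Y2 kthP' cg_bot. Qed.

Lemma Y21 n d (y : {ffun 'I_n -> 'I_d}) : Y2 y <= Y1 y.
Proof.
rewrite leqNgt; apply/negP => h.
move: (h); rewrite /Y2 kthP' => h2.
have : Y1 y < Y1 y by rewrite {2}/Y1 kthP'; apply: leq_trans h2.
by rewrite ltnn.
Qed.

Lemma beatsE m n a d (x : {ffun 'I_m -> 'I_a}) (y : {ffun 'I_n -> 'I_d}) :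
  beats22 x y = (0 < cg (Y1 y) (dice_values x)) && (1 < cg (Y2 y) (dice_values x)).
Proof. by rewrite /beats22 !kthP'. Qed.

Local Open Scope ring_scope.

Lemma step1 m n a d : prob22 m n a d =
  ((a%:R : rat) ^+ m * (d%:R) ^+ n)^-1 * \sum_(y : {ffun 'I_n -> 'I_d}) (Gc m a (Y1 y) (Y2 y))%:R.
Proof.
rewrite /prob22 !prodr_const !card_ord exchange_big /= mulr_sumr.
apply: eq_bigr => y _.
rewrite /Gc /cnt natr_sum mulr_sumr; apply: eq_bigr => x _.
by rewrite beatsE invfM !exprVn.
Qed.

Lemma pick_nat (F : nat -> rat) lo hi k : (lo <= k < hi)%N ->
  \sum_(lo <= i < hi) ((i == k)%:R * F i) = F k.
Proof.
case/andP=> h1 h2.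
rewrite (@big_cat_nat _ _ _ k lo hi) //; last exact: ltnW.
rewrite (@big_ltn _ _ _ k hi) // eqxx mul1r /=.
rewrite (@big_nat_cond _ _ _ lo k) (@big_nat_cond _ _ _ k.+1 hi).
rewrite (@big1 _ _ _ _ _ _ (fun i => (i == k)%:R * F i)); last first.
  by move=> i /andP[/andP[_ hi0] _]; rewrite (ltn_eqF hi0) mul0r.
rewrite (@big1 _ _ _ _ _ _ (fun i => (i == k)%:R * F i)); last first.
  by move=> i /andP[/andP[hi0 _] _]; rewrite eq_sym (ltn_eqF hi0) mul0r.
by rewrite add0r addr0.
Qed.

Definition Mc n d u v : rat :=
  \sum_(y : {ffun 'I_n -> 'I_d}) ((Y1 y == u) && (Y2 y == v))%:R.

Lemma step2 n d (g : nat -> nat -> rat) : (2 <= n)%N ->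
  \sum_(y : {ffun 'I_n -> 'I_d}) g (Y1 y) (Y2 y) =
  \sum_(1 <= u < d.+1) \sum_(1 <= v < u.+1) g u v * Mc n d u v.
Proof.
move=> hn.
have pw : forall y : {ffun 'I_n -> 'I_d}, g (Y1 y) (Y2 y) =
   \sum_(1 <= u < d.+1) \sum_(1 <= v < u.+1) g u v * ((Y1 y == u) && (Y2 y == v))%:R.
  move=> y.
  rewrite (eq_bigr (fun u => (u == Y1 y)%:R * \sum_(1 <= v < u.+1) ((v == Y2 y)%:R * g u v))); last first.
    move=> u _; rewrite mulr_sumr; apply: eq_bigr => v _.
    rewrite ![_ == u]eq_sym ![_ == v]eq_sym.
    by case: (u == Y1 y); case: (v == Y2 y); rewrite /= ?mulr0 ?mul0r ?mulr1 ?mul1r.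
  rewrite pick_nat; last by rewrite ltnS Y1_le andbT (leq_trans (Y2_gt0 y hn) (Y21 y)).
  by rewrite pick_nat // Y2_gt0 //= ltnS Y21.
rewrite (eq_bigr _ (fun y _ => pw y)) exchange_big /=.
apply: eq_bigr => u _; rewrite exchange_big /=; apply: eq_bigr => v _.
by rewrite /Mc mulr_sumr.
Qed.

Definition Hr n d al be : rat :=
  \sum_(y : {ffun 'I_n -> 'I_d}) ((Y1 y <= al)%N && (Y2 y <= be)%N)%:R.

Lemma HrE n d al be : Hr n d al be = (Hc n d al be)%:R.
Proof.
rewrite /Hr /Hc /cnt natr_sum; apply: eq_bigr => y _.
have e1 : (Y1 y <= al)%N = (cg al (dice_values y) == 0).
  by rewrite leqNgt /Y1 kthP' lt0n negbK.
have e2 : (Y2 y <= be)%N = (cg be (dice_values y) <= 1)%N.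
  by rewrite [LHS]leqNgt /Y2 kthP' -leqNgt.
by rewrite e1 e2.
Qed.

Lemma HrF n d al be : (be <= al)%N -> (al <= d)%N ->
  Hr n d al be = (be%:R : rat) ^+ n + n%:R * (al%:R - be%:R) * be%:R ^+ n.-1.
Proof.
by move=> h1 h2; rewrite HrE Hc_formula // natrD !natrM natrB // !natrX.
Qed.

Lemma ind4 (p q u v : nat) : (1 <= u)%N -> (1 <= v)%N ->
  (((p == u) && (q == v))%:R : rat) =
  ((p <= u)%N && (q <= v)%N)%:R - ((p <= u.-1)%N && (q <= v)%N)%:R
  - ((p <= u)%N && (q <= v.-1)%N)%:R + ((p <= u.-1)%N && (q <= v.-1)%N)%:R.
Proof.
move=> hu hv.
have e1 : (p == u) = (p <= u)%N && ~~ (p <= u.-1)%N.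
  by apply/eqP/andP => [->|[a b]]; lia.
have e2 : (q == v) = (q <= v)%N && ~~ (q <= v.-1)%N.
  by apply/eqP/andP => [->|[a b]]; lia.
have i1 : (p <= u.-1)%N -> (p <= u)%N by lia.
have i2 : (q <= v.-1)%N -> (q <= v)%N by lia.
rewrite e1 e2; move: i1 i2.
case: (p <= u)%N; case: (p <= u.-1)%N; case: (q <= v)%N; case: (q <= v.-1)%N => H1 H2;
  rewrite /= ?mulr0n ?mulr1n; first [lra | by move: (H1 isT) | by move: (H2 isT)].
Qed.

Lemma ind2 (p q u : nat) : (1 <= u)%N -> (q <= p)%N ->
  (((p == u) && (q == u))%:R : rat) =
  ((p <= u)%N && (q <= u)%N)%:R - ((p <= u)%N && (q <= u.-1)%N)%:R.
Proof.
move=> hu hqp.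
case: (ltngtP p u) => hp; case: (ltngtP q u) => hq /=; try lia;
  rewrite ?(ltnW hp) ?(ltnW hq) ?leqnn /=; try lra.
all: try (have -> : (q <= u.-1)%N by lia); try (have -> : (q <= u.-1)%N = false by lia);
  rewrite /= ?mulr0n ?mulr1n; lra.
Qed.

Lemma Mv n d u v : (1 <= v)%N -> (v < u)%N -> (u <= d)%N ->
  Mc n d u v = n%:R * ((v%:R : rat) ^+ n.-1 - (v%:R - 1) ^+ n.-1).
Proof.
move=> h1 h2 h3.
rewrite /Mc (eq_bigr _ (fun y _ => ind4 (Y1 y) (Y2 y) (leq_trans h1 (ltnW h2)) h1)).
rewrite big_split /= !sumrB.
rewrite -!/(Hr n d _ _) !HrF; try lia.
have -> : u.-1 = (u - 1)%N by lia.
have -> : v.-1 = (v - 1)%N by lia.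
rewrite !natrB; try lia.
ring.
Qed.

Lemma Mu n d u : (1 <= u)%N -> (u <= d)%N ->
  Mc n d u u = (u%:R : rat) ^+ n - (u%:R - 1) ^+ n - n%:R * (u%:R - 1) ^+ n.-1.
Proof.
move=> h1 h3.
rewrite /Mc (eq_bigr _ (fun y _ => ind2 h1 (Y21 y))).
rewrite sumrB -!/(Hr n d _ _) !HrF; try lia.
have -> : u.-1 = (u - 1)%N by lia.
rewrite !natrB; try lia.
ring.
Qed.

Lemma GrF m a u v : (v <= u)%N -> (u <= a)%N ->
  ((Gc m a u v)%:R : rat) = a%:R ^+ m - u%:R ^+ m - m%:R * (a%:R - u%:R) * v%:R ^+ m.-1.
Proof.
move=> h1 h2; have := Gc_formula m h1 h2.
move/(congr1 (fun k : nat => (k%:R : rat))); rewrite !natrD !natrM natrB // !natrX => <-.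
ring.
Qed.


Local Open Scope ring_scope.

Theorem proposition6p3 (a d m n : nat) (ha : (1 <= a)%N) (hd : (1 <= d)%N)
    (hm : (2 <= m)%N) (hn : (2 <= n)%N) :
  prob22 m n a d =
    \sum_(2 <= y1 < (minn a d).+1) \sum_(1 <= y2 < y1)
       ((n%:R * ((y2%:R : rat) ^+ n.-1 - (y2%:R - 1) ^+ n.-1)
          * ((a%:R : rat) ^+ m - (y1%:R) ^+ m - m%:R * (a%:R - y1%:R) * (y2%:R) ^+ m.-1))
        / ((a%:R : rat) ^+ m * (d%:R) ^+ n))
  + \sum_(1 <= y1 < (minn a d).+1)
       ((((y1%:R : rat) ^+ n - (y1%:R - 1) ^+ n - n%:R * (y1%:R - 1) ^+ n.-1)
          * ((a%:R : rat) ^+ m + (m%:R - 1) * (y1%:R) ^+ m - a%:R * m%:R * (y1%:R) ^+ m.-1))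
        / ((a%:R : rat) ^+ m * (d%:R) ^+ n)).
Proof.
rewrite step1 (@step2 n d (fun u v => (Gc m a u v)%:R) hn).
set D := ((a%:R : rat) ^+ m * (d%:R) ^+ n).
have hmin : (1 <= minn a d <= d)%N by lia.
rewrite (@big_cat_nat _ _ _ (minn a d).+1 1 d.+1) /=; try lia.
have -> : \sum_((minn a d).+1 <= i < d.+1) \sum_(1 <= v < i.+1) (Gc m a i v)%:R * Mc n d i v = 0 :> rat.
  rewrite big_nat_cond big1 // => u /andP[/andP[hu1 hu2] _]; apply: big1 => v _.
  rewrite Gc_big ?mul0r //; lia.
rewrite addr0.
rewrite (@eq_big_nat _ _ _ 1 (minn a d).+1 _ (fun y1 =>
   \sum_(1 <= y2 < y1)
        n%:R * (y2%:R ^+ n.-1 - (y2%:R - 1) ^+ n.-1) *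
        (a%:R ^+ m - y1%:R ^+ m - m%:R * (a%:R - y1%:R) * y2%:R ^+ m.-1) +
   (y1%:R ^+ n - (y1%:R - 1) ^+ n - n%:R * (y1%:R - 1) ^+ n.-1) *
     (a%:R ^+ m + (m%:R - 1) * y1%:R ^+ m - a%:R * m%:R * y1%:R ^+ m.-1))); last first.
  move=> u /andP[hu1 hu2].
  rewrite big_nat_recr //=; congr (_ + _).
    apply: eq_big_nat => v /andP[hv1 hv2].
    rewrite GrF ?Mv; try lia.
    ring.
  rewrite GrF ?Mu; try lia.
  have em : forall x : rat, x ^+ m = x * x ^+ m.-1.
    by move=> x; rewrite -exprS prednK //; lia.
  rewrite !em; ring.
rewrite big_split /= (@big_ltn _ _ _ 1 (minn a d).+1); last lia.
rewrite (@big_geq _ _ _ 1 1) // add0r.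
rewrite [LHS]mulrC mulrDl !mulr_suml; congr (_ + _).
  apply: eq_bigr => u _; rewrite mulr_suml; apply: eq_bigr => v _.
  by rewrite mulrC.
Qed.
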